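(* Consider the remote-estimation MDP described in the context, assume $\rho^2(\mathbf{A})(1-\theta_{\max})<1$, and let $V$ be the relative value function obtained as the limit of relative value iteration (defined in the context) started from a function $V^0$ that is non-decreasing in $\delta$ and in $\tau$ (e.g. $V^0\equiv0$). Then: (i) for every $\tau\in\mathbb{N}^+$, $\delta\mapsto V(\tau,\delta)$ is non-decreasing; (ii) for every $\delta\in\mathbb{N}^+$, $\tau\mapsto V(\tau,\delta)$ is non-decreasing.
   Context: Linear Gaussian process $\mathbf{x}_{k+1}=\mathbf{A}\mathbf{x}_k+\mathbf{w}_k$, $\mathbf{w}_k$ i.i.d. $\mathcal{N}(0,\mathbf{Q})$, $\mathbf{Q}\succeq 0$; measurements $\mathbf{y}_k=\mathbf{C}\mathbf{x}_k+\mathbf{v}_k$, $\mathbf{v}_k$ i.i.d. $\mathcal{N}(0,\mathbf{R})$, $\mathbf{R}\succ0$; $(\mathbf{A},\mathbf{C})$ observable, $(\mathbf{A},\sqrt{\mathbf{Q}})$ controllable; $\bar{\mathbf{P}}$ the steady-state a posteriori Kalman error covariance; $\rho(\cdot)$ spectral radius. $f(\delta)=\mathrm{tr}\big(\mathbf{A}^{\delta}\bar{\mathbf{P}}(\mathbf{A}^T)^{\delta}+\sum_{r=0}^{\delta-1}\mathbf{A}^r\mathbf{Q}(\mathbf{A}^T)^r\big)$, which is non-decreasing in $\delta$. $\theta:\mathbb{N}^+\to[\theta_{\min},\theta_{\max}]\subseteq[0,1]$ non-increasing; $\bar\theta=1-\theta$; integers $\tau_D>1$, $\delta_R>1$. MDP: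 states $s=(\tau,\delta)\in\mathcal{S}=\mathbb{N}^+\times\mathbb{N}^+$, actions $\mathcal{U}=\{0,1,2\}$. Transitions $P_{s,s'}(u)$ from $(\tau,\delta)$: $u=0$: to $(\tau+1,\delta+1)$ w.p. 1; $u=1$: to $(\tau+\tau_D,1)$ w.p. $\theta(\tau)$, to $(\tau+\tau_D,\delta+1)$ w.p. $\bar\theta(\tau)$; $u=2$: to $(1,\delta+\delta_R)$ w.p. 1. Cost $c(s,u)=f(\delta)$ for $u\in\{0,1\}$, $c(s,2)=\sum_{r=0}^{\delta_R-1}f(\delta+r)$. Relative value iteration: fix a reference state $s_{\mathrm{ref}}$; for $n\ge1$, $Q^n(s,u)=c(s,u)+\sum_{s'}P_{s,s'}(u)V^{n-1}(s')$, $\tilde V^n(s)=\min_{u\in\mathcal{U}}Q^n(s,u)$, $V^n(s)=\tilde V^n(s)-\tilde V^n(s_{\mathrm{ref}})$; $V=\lim_n V^n$, which solves the average-cost Bellman equation $\lambda^*+V(s)=\min_u[c(s,u)+\sum_{s'}P_{s,s'}(u)V(s')]$. *)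

(* Defs.v *)
From mathcomp Require Import all_boot all_order all_algebra.
From mathcomp Require Import all_classical all_reals topology normedtype sequences.
From mathcomp Require Import complex.

Set Implicit Arguments.
Unset Strict Implicit.
Unset Printing Implicit Defensive.

Import Order.TTheory GRing.Theory Num.Theory.
Local Open Scope ring_scope.
Local Open Scope classical_set_scope.

Definition psd (R : realType) (n : nat) (M : 'M[R]_n) : Prop :=
  M^T = M /\ forall x : 'cV[R]_n, 0 <= (x^T *m M *m x) 0 0.

Definition pd (R : realType) (n : nat) (M : 'M[R]_n) : Prop :=
  M^T = M /\ forall x : 'cV[R]_n, x != 0 -> 0 < (x^T *m M *m x) 0 0.

Definition observable (R : realType) (n m : nat)
  (A : 'M[R]_n) (C : 'M[R]_(m, n)) : Prop :=
  forall x : 'cV[R]_n, (forall k : nat, C *m (A ^+ k) *m x = 0) -> x = 0.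

Definition controllable (R : realType) (n p : nat)
  (A : 'M[R]_n) (B : 'M[R]_(n, p)) : Prop :=
  forall y : 'rV[R]_n, (forall k : nat, y *m (A ^+ k) *m B = 0) -> y = 0.

Definition spectral_radius (R : realType) (n : nat) (A : 'M[R]_n) : R :=
  sup [set Normc.normc z | z in
        [set z : R[i] | eigenvalue (map_mx (real_complex R) A) z]].

Definition kalman_apriori (R : realType) (n : nat) (A Q P : 'M[R]_n) : 'M[R]_n :=
  A *m P *m A^T + Q.

Definition steady_state_posterior (R : realType) (n m : nat)
  (A : 'M[R]_n) (C : 'M[R]_(m, n)) (Q : 'M[R]_n) (Rv : 'M[R]_m)
  (P : 'M[R]_n) : Prop :=
  psd P /\
  let Pm := kalman_apriori A Q P in
  P = Pm - Pm *m C^T *m invmx (C *m Pm *m C^T + Rv) *m C *m Pm.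

Definition fcost (R : realType) (n : nat) (A Q P : 'M[R]_n) (d : nat) : R :=
  \tr (A ^+ d *m P *m (A^T) ^+ d + \sum_(r < d) A ^+ r *m Q *m (A^T) ^+ r).

(* States (tau, delta) with tau, delta >= 1 are encoded as pairs of nats;
   value functions are curried  V tau delta.  Actions are u = 0, 1, 2. *)

Definition Qval (R : realType) (f : nat -> R) (theta : nat -> R)
  (tauD deltaR : nat) (V : nat -> nat -> R) (tau delta u : nat) : R :=
  match u with
  | 0 => f delta + V tau.+1 delta.+1
  | 1 => f delta + (theta tau * V (tau + tauD)%N 1%N
                    + (1 - theta tau) * V (tau + tauD)%N delta.+1)
  | _ => \sum_(r < deltaR) f (delta + r)%N + V 1%N (delta + deltaR)%N
  end.

Definition Vtilde (R : realType) (f : nat -> R) (theta : nat -> R)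
  (tauD deltaR : nat) (V : nat -> nat -> R) (tau delta : nat) : R :=
  Num.min (Qval f theta tauD deltaR V tau delta 0)
    (Num.min (Qval f theta tauD deltaR V tau delta 1)
             (Qval f theta tauD deltaR V tau delta 2)).

Fixpoint rvi (R : realType) (f : nat -> R) (theta : nat -> R)
  (tauD deltaR : nat) (tauref deltaref : nat) (V0 : nat -> nat -> R)
  (k : nat) : nat -> nat -> R :=
  match k with
  | 0 => V0
  | k'.+1 =>
      let Vp := rvi f theta tauD deltaR tauref deltaref V0 k' in
      fun tau delta =>
        Vtilde f theta tauD deltaR Vp tau delta
        - Vtilde f theta tauD deltaR Vp tauref deltaref
  end.

(* Main.v *)
Require Import Defs.
From mathcomp Require Import all_boot all_order all_algebra.
From mathcomp Require Import all_classical all_reals topology normedtype sequences.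
From mathcomp Require Import complex.
Import Order.TTheory GRing.Theory Num.Theory.
Local Open Scope ring_scope.
Local Open Scope classical_set_scope.
Import numFieldNormedType.Exports.

Set Implicit Arguments.
Section LA.
Variable R : realType.

Lemma psd_add n (M N : 'M[R]_n) : psd M -> psd N -> psd (M + N).
Proof.
move=> [tM pM] [tN pN]; split; first by rewrite linearD /= tM tN.
by move=> x; rewrite mulmxDr mulmxDl mxE addr_ge0.
Qed.

Lemma psd_congr p n (B : 'M[R]_(p, n)) (M : 'M[R]_n) : psd M -> psd (B *m M *m B^T).
Proof.
move=> [tM pM]; split; first by rewrite !trmx_mul trmxK tM mulmxA.
move=> x; have := pM (B^T *m x).
by rewrite trmx_mul trmxK !mulmxA.
Qed.

Lemma pd_psd n (M : 'M[R]_n) : pd M -> psd M.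
Proof.
move=> [tM pM]; split => // x; case: (eqVneq x 0) => [->|/pM/ltW//].
by rewrite mulmx0 mxE.
Qed.

Lemma pd_unit n (M : 'M[R]_n) : pd M -> M \in unitmx.
Proof.
move=> [tM pM]; rewrite unitmxE unitfE; apply/negP => /det0P [v v0 vM].
have h : v^T != 0.
  by apply: contra v0 => /eqP/(congr1 trmx); rewrite trmxK linear0 => ->.
by have := pM _ h; rewrite trmxK vM mul0mx mxE ltxx.
Qed.

Lemma psd_inv n (M : 'M[R]_n) : pd M -> psd (invmx M).
Proof.
move=> hM; have U := pd_unit hM; have [tM _] := hM.
have -> : invmx M = invmx M *m M *m (invmx M)^T.
  by rewrite mulVmx // mul1mx trmx_inv tM.
exact/psd_congr/pd_psd.
Qed.

Lemma psd_tr n (M : 'M[R]_n) : psd M -> 0 <= \tr M.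
Proof.
move=> [_ pM]; rewrite /mxtrace; apply: sumr_ge0 => i _.
have := pM (delta_mx i 0); rewrite trmx_delta -rowE -colE !mxE.
by [].
Qed.

Lemma trmxX n (A : 'M[R]_n) d : (A ^+ d)^T = (A^T) ^+ d.
Proof.
elim: d => [|d IH]; first by rewrite !expr0 trmx1.
by rewrite exprS exprSr -mulmxE trmx_mul IH mulmxE.
Qed.

End LA.

Lemma zm (V : zmodType) (a s b c : V) : a + (s+b) = c + s + (a+b-c).
Proof. by rewrite [RHS]addrC -[in RHS]addrA addKr [s + b]addrC addrA. Qed.

Section F.
Variable R : realType.
Lemma psd_pd_add n (M N : 'M[R]_n) : psd M -> pd N -> pd (M + N).
Proof.
move=> [tM pM] [tN pN]; split; first by rewrite linearD /= tM tN.
by move=> x x0; rewrite mulmxDr mulmxDl mxE ltr_wpDl ?pN.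
Qed.

Lemma fcost_step n m (A : 'M[R]_n) (C : 'M[R]_(m, n)) (Q : 'M[R]_n) (Rv : 'M[R]_m) P :
  psd Q -> pd Rv -> steady_state_posterior A C Q Rv P ->
  forall d, fcost A Q P d <= fcost A Q P d.+1.
Proof.
move=> hQ hR [hPp hP] d.
set Pm := kalman_apriori A Q P in hP.
have hPm : psd Pm by apply: psd_add => //; apply: psd_congr.
set Mm := C *m Pm *m C^T + Rv in hP.
have hM : pd Mm by apply: psd_pd_add => //; apply: psd_congr.
set K := Pm *m C^T *m invmx Mm *m C *m Pm in hP.
have hK : psd K.
  have -> : K = (Pm *m C^T) *m invmx Mm *m (Pm *m C^T)^T.
    by rewrite trmx_mul trmxK hPm.1 /K !mulmxA.
  exact/psd_congr/psd_inv.
have eK : K = Pm - P by rewrite hP opprB addrC subrK.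
suff -> : fcost A Q P d.+1 = fcost A Q P d + \tr (A ^+ d *m K *m (A^T) ^+ d).
  by rewrite lerDl; apply/psd_tr; rewrite -trmxX; apply: psd_congr.
rewrite /fcost big_ord_recr /= -!mxtraceD; congr (mxtrace _).
rewrite eK /Pm /kalman_apriori exprSr exprS -!mulmxE.
rewrite !(mulmxBr, mulmxDr, mulmxBl, mulmxDl) !mulmxA.
exact: zm.
Qed.
End F.

From mathcomp Require Import lra.
Unset Implicit Arguments.
Section DP.
Variable R : realType.
Variables (f theta : nat -> R) (tauD deltaR : nat).
Hypothesis fm : forall d1 d2, (d1 <= d2)%N -> f d1 <= f d2.
Hypothesis th0 : forall t, (0 < t)%N -> 0 <= theta t.
Hypothesis th1 : forall t, (0 < t)%N -> theta t <= 1.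
Hypothesis thm : forall t1 t2, (0 < t1)%N -> (t1 <= t2)%N -> theta t2 <= theta t1.

Definition mono (V : nat -> nat -> R) :=
  (forall tau d1 d2, (0 < tau)%N -> (0 < d1)%N -> (d1 <= d2)%N ->
     V tau d1 <= V tau d2) /\
  (forall d t1 t2, (0 < d)%N -> (0 < t1)%N -> (t1 <= t2)%N ->
     V t1 d <= V t2 d).

Lemma Qmono V u : mono V -> mono (fun t d => Qval f theta tauD deltaR V t d u).
Proof.
move=> [V1 V2]; case: u => [|[|u]] /=; split.
- by move=> t d1 d2 t0 d0 dd; rewrite lerD ?fm ?V1.
- by move=> d t1 t2 d0 t0 tt; rewrite lerD ?V2 // ltnS.
- move=> t d1 d2 t0 d0 dd; rewrite lerD ?fm // lerD // ler_wpM2l ?V1 //.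
  + by rewrite subr_ge0 th1.
  + by rewrite addn_gt0 t0.
- move=> d t1 t2 d0 t0 tt.
  have t20 : (0 < t2)%N by apply: leq_trans tt.
  have pt1 : (0 < t1 + tauD)%N by rewrite addn_gt0 t0.
  have pt2 : (0 < t2 + tauD)%N by rewrite addn_gt0 t20.
  have tt' : (t1 + tauD <= t2 + tauD)%N by rewrite leq_add2r.
  have ha := V2 1%N _ _ isT pt1 tt'.
  have hb := V2 d.+1 _ _ isT pt1 tt'.
  have hab := V1 _ 1%N d.+1 pt1 isT isT.
  have h0 := th0 _ t20; have h1 := th1 _ t20; have hm := thm _ _ t0 tt.
  rewrite lerD2l.
  set a1 := V _ 1%N in ha hab *; set a2 := V _ 1%N in ha *.
  set b1 := V _ d.+1 in hb hab *; set b2 := V _ d.+1 in hb *.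
  set T1 := theta t1 in hm *; set T2 := theta t2 in h0 h1 hm *.
  have p1 : 0 <= T2 * (a2 - a1) by rewrite mulr_ge0 // subr_ge0.
  have p2 : 0 <= (1 - T2) * (b2 - b1) by rewrite mulr_ge0 // subr_ge0.
  have p3 : 0 <= (T1 - T2) * (b1 - a1) by rewrite mulr_ge0 // subr_ge0.
  lra.
- move=> t d1 d2 t0 d0 dd; rewrite lerD //.
    by apply: ler_sum => i _; rewrite fm // leq_add2r.
  by rewrite V1 // ?addn_gt0 ?d0 // leq_add2r.
- by move=> *; rewrite lexx.
Qed.

Lemma minle (a b a' b' : R) : a <= a' -> b <= b' -> Num.min a b <= Num.min a' b'.
Proof. by move=> ha hb; rewrite le_min !ge_min ha hb orbT. Qed.

Lemma Vtmono V : mono V -> mono (Vtilde f theta tauD deltaR V).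
Proof.
move=> hV; have [A1 A2] := Qmono _ 0 hV; have [B1 B2] := Qmono _ 1 hV;
  have [C1 C2] := Qmono _ 2 hV; split.
- by move=> *; rewrite /Vtilde !minle ?A1 ?B1 ?C1.
- by move=> *; rewrite /Vtilde !minle ?A2 ?B2 ?C2.
Qed.

Lemma rvimono tr dr V0 : mono V0 -> forall k, mono (rvi f theta tauD deltaR tr dr V0 k).
Proof.
move=> h0; elim=> [//|k IH] /=.
have [T1 T2] := Vtmono _ IH; split.
- by move=> *; rewrite lerD2r T1.
- by move=> *; rewrite lerD2r T2.
Qed.
End DP.
Theorem proposition1
  (R : realType) (n m : nat)
  (A : 'M[R]_n) (C : 'M[R]_(m, n)) (Q sqrtQ : 'M[R]_n) (Rv : 'M[R]_m)
  (Pbar : 'M[R]_n)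
  (theta : nat -> R) (theta_min theta_max : R) (tauD deltaR : nat)
  (tauref deltaref : nat) (V0 V : nat -> nat -> R) :
  psd Q -> pd Rv ->
  psd sqrtQ -> sqrtQ *m sqrtQ = Q ->
  observable A C -> controllable A sqrtQ ->
  steady_state_posterior A C Q Rv Pbar ->
  0 <= theta_min -> theta_min <= theta_max -> theta_max <= 1 ->
  (forall tau, (0 < tau)%N -> theta_min <= theta tau <= theta_max) ->
  (forall tau1 tau2, (0 < tau1)%N -> (tau1 <= tau2)%N -> theta tau2 <= theta tau1) ->
  (1 < tauD)%N -> (1 < deltaR)%N ->
  spectral_radius A ^+ 2 * (1 - theta_max) < 1 ->
  (0 < tauref)%N -> (0 < deltaref)%N ->
  (forall tau d1 d2, (0 < tau)%N -> (0 < d1)%N -> (d1 <= d2)%N ->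
     V0 tau d1 <= V0 tau d2) ->
  (forall d t1 t2, (0 < d)%N -> (0 < t1)%N -> (t1 <= t2)%N ->
     V0 t1 d <= V0 t2 d) ->
  (forall tau d, (0 < tau)%N -> (0 < d)%N ->
     (fun k => rvi (fcost A Q Pbar) theta tauD deltaR tauref deltaref V0 k tau d)
       @ \oo --> V tau d) ->
  (forall tau d1 d2, (0 < tau)%N -> (0 < d1)%N -> (d1 <= d2)%N ->
     V tau d1 <= V tau d2) /\
  (forall d t1 t2, (0 < d)%N -> (0 < t1)%N -> (t1 <= t2)%N ->
     V t1 d <= V t2 d).
Proof.
move=> hQ hR _ _ _ _ hP tmin0 _ tmax1 thb tha _ _ _ _ _ V01 V02 hV.
have fm : forall d1 d2, (d1 <= d2)%N -> fcost A Q Pbar d1 <= fcost A Q Pbar d2.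
  move=> d1 d2 /subnK <-; elim: (d2 - d1)%N => [//|k IH].
  by rewrite addSn; apply: le_trans IH (fcost_step hQ hR hP _).
have th0 : forall t, (0 < t)%N -> 0 <= theta t.
  by move=> t /thb /andP [h _]; apply: le_trans h.
have th1 : forall t, (0 < t)%N -> theta t <= 1.
  by move=> t /thb /andP [_ h]; apply: le_trans tmax1.
have M := rvimono R (fcost A Q Pbar) theta tauD deltaR fm th0 th1 tha tauref deltaref V0 (conj V01 V02).
split.
- move=> tau d1 d2 t0 d0 dd.
  apply: (ler_cvg_to (hV _ _ t0 d0) (hV _ _ t0 (leq_trans d0 dd))).
  by apply: nearW => k; apply: (M k).1.
- move=> d t1 t2 d0 t0 tt.
  apply: (ler_cvg_to (hV _ _ t0 d0) (hV _ _ (leq_trans t0 tt) d0)).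
  by apply: nearW => k; apply: (M k).2.
Qed.
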